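(* Let $n\geq 3$ and let $K\subset\mathbb{R}^n$ be an affine symmetric body of revolution admitting two different hyperplanes of revolution. Then $K$ is an ellipsoid.
   Context: A symmetric convex body $K\subset\mathbb{R}^n$ (compact, convex, nonempty interior, invariant under $x\mapsto-x$) is a symmetric body of revolution if it admits an axis of revolution: a 1-dimensional linear subspace $L$ such that every section of $K$ by an affine hyperplane $A$ orthogonal to $L$ is a closed Euclidean $(n-1)$-ball in $A$ centered at $A\cap L$ (possibly empty or a point); $L^\perp$ is the associated hyperplane of revolution. An affine symmetric body of revolution is a convex body linearly equivalent to a symmetric body of revolution; the images of an axis and its associated hyperplane under the linear equivalence are called an axis of revolution and associated hyperplane of revolution of it. An ellipsoid is a set affinely equivalent to a closed Euclidean unit ball. *)

(* Defs.v *)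
From mathcomp Require Import all_boot.
From Stdlib Require Import Reals.
Set Implicit Arguments. Unset Strict Implicit.
Open Scope R_scope.

Definition vec (n : nat) := 'I_n -> R.

Definition vadd n (x y : vec n) : vec n := fun i => x i + y i.
Definition vsub n (x y : vec n) : vec n := fun i => x i - y i.
Definition vscale n (a : R) (x : vec n) : vec n := fun i => a * x i.
Definition vopp n (x : vec n) : vec n := fun i => - x i.

Definition dot n (x y : vec n) : R := \big[Rplus/0]_(i < n) (x i * y i).
Definition vnorm n (x : vec n) : R := sqrt (dot x x).

Definition vset n := vec n -> Prop.

Definition convex n (K : vset n) : Prop :=
  forall x y l, K x -> K y -> 0 <= l <= 1 ->
    K (vadd (vscale l x) (vscale (1 - l) y)).
Definition closed_set n (K : vset n) : Prop :=
  forall x, (forall eps, 0 < eps -> exists y, K y /\ vnorm (vsub x y) < eps) -> K x.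
Definition bounded n (K : vset n) : Prop :=
  exists M, forall x, K x -> vnorm x <= M.
Definition nonempty_interior n (K : vset n) : Prop :=
  exists x eps, 0 < eps /\ forall y, vnorm (vsub y x) < eps -> K y.

Definition convex_body n (K : vset n) : Prop :=
  convex K /\ closed_set K /\ bounded K /\ nonempty_interior K.
Definition symmetric n (K : vset n) : Prop := forall x, K x -> K (vopp x).
Definition symmetric_convex_body n (K : vset n) : Prop :=
  convex_body K /\ symmetric K.

(* The line L = span u (u <> 0) is an axis of revolution of K: every section of K
   by an affine hyperplane {x | <x,u> = t} orthogonal to L is either empty or a
   closed Euclidean ball in that hyperplane (radius r >= 0, a point if r = 0)
   centered at the point of L on that hyperplane. *)
Definition axis_of_revolution n (K : vset n) (u : vec n) : Prop :=
  (exists i, u i <> 0) /\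
  forall t : R,
    (forall x, ~ (K x /\ dot x u = t)) \/
    exists r, 0 <= r /\
      forall x, (K x /\ dot x u = t) <->
        (dot x u = t /\ vnorm (vsub x (vscale (t / dot u u) u)) <= r).

Definition symmetric_body_of_revolution n (K : vset n) (u : vec n) : Prop :=
  symmetric_convex_body K /\ axis_of_revolution K u.

Definition lin n (A : 'I_n -> 'I_n -> R) (x : vec n) : vec n :=
  fun i => \big[Rplus/0]_(j < n) (A i j * x j).
Definition invertible n (A : 'I_n -> 'I_n -> R) : Prop :=
  exists B : 'I_n -> 'I_n -> R,
    forall x, lin B (lin A x) = x /\ lin A (lin B x) = x.

Definition image n (A : 'I_n -> 'I_n -> R) (S : vset n) : vset n :=
  fun x => exists y, S y /\ x = lin A y.
Definition same_set n (S T : vset n) : Prop := forall x, S x <-> T x.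
Definition orth_hyperplane n (u : vec n) : vset n := fun x => dot x u = 0.

(* H is an (associated) hyperplane of revolution of the affine symmetric body of
   revolution K: K = A(K0) for a linear equivalence A and a symmetric body of
   revolution K0 with axis span u, and H = A(u^perp). *)
Definition hyperplane_of_revolution n (K : vset n) (H : vset n) : Prop :=
  exists (A : 'I_n -> 'I_n -> R) (K0 : vset n) (u : vec n),
    invertible A /\ symmetric_body_of_revolution K0 u /\
    same_set K (image A K0) /\ same_set H (image A (orth_hyperplane u)).

Definition affine_symmetric_body_of_revolution n (K : vset n) : Prop :=
  exists H, hyperplane_of_revolution K H.

Definition ellipsoid n (K : vset n) : Prop :=
  exists (A : 'I_n -> 'I_n -> R) (c : vec n), invertible A /\
    same_set K (fun x => exists y, vnorm y <= 1 /\ x = vadd (lin A y) c).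

(* Main.v *)
Require Import Defs.
From HB Require Import structures.
From mathcomp Require Import all_boot.
From Stdlib Require Import Reals Lra Lia Psatz ClassicalEpsilon FunctionalExtensionality Classical.
Set Implicit Arguments. Unset Strict Implicit.
Open Scope R_scope.


Lemma RplusA : associative Rplus. Proof. move=> x y z; ring. Qed.
Lemma RplusC : commutative Rplus. Proof. move=> x y; ring. Qed.
Lemma Rplus0l : left_id 0 Rplus. Proof. move=> x; ring. Qed.
HB.instance Definition _ := Monoid.isComLaw.Build R 0 Rplus RplusA RplusC Rplus0l.

Lemma sum_split n (F G : 'I_n -> R) :
  \big[Rplus/0]_(i < n) (F i + G i) = \big[Rplus/0]_(i < n) F i + \big[Rplus/0]_(i < n) G i.
Proof. by rewrite big_split. Qed.

Lemma sum_scal n a (F : 'I_n -> R) :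
  \big[Rplus/0]_(i < n) (a * F i) = a * \big[Rplus/0]_(i < n) F i.
Proof.
  symmetry. apply: (big_morph (fun x => a * x)).
  - move=> x y; ring.
  - ring.
Qed.

Lemma sum_ge0 n (F : 'I_n -> R) : (forall i, 0 <= F i) -> 0 <= \big[Rplus/0]_(i < n) F i.
Proof. move=> H. apply: (big_ind (fun x => 0 <= x)); [lra | move=> x y; lra | move=> i _; apply H]. Qed.

Lemma sum_ext n (F G : 'I_n -> R) : (forall i, F i = G i) ->
  \big[Rplus/0]_(i < n) F i = \big[Rplus/0]_(i < n) G i.
Proof. move=> H; apply: eq_bigr => i _; apply H. Qed.

Lemma sum_delta n (F : 'I_n -> R) (j : 'I_n) :
  \big[Rplus/0]_(i < n) (if i == j then F i else 0) = F j.
Proof.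
  rewrite (bigD1 j) //= eqxx big1 ?Rplus_0_r // => i /negbTE ->. by [].
Qed.

Lemma sum_ge_term n (F : 'I_n -> R) (j : 'I_n) : (forall i, 0 <= F i) ->
  F j <= \big[Rplus/0]_(i < n) F i.
Proof.
  move=> H. rewrite (bigD1 j) //=.
  have : 0 <= \big[Rplus/0]_(i < n | i != j) F i.
  { apply: (big_ind (fun x => 0 <= x)); [lra | move=> x y; lra | move=> i _; apply H]. }
  move: (\big[Rplus/0]_(i < n | i != j) F i) => S. lra.
Qed.

Definition ebas n (j : 'I_n) : vec n := fun i => if i == j then 1 else 0.
Definition vzero n : vec n := fun _ => 0.

Definition linf n (l : vec n -> R) : Prop :=
  (forall x y, l (vadd x y) = l x + l y) /\ (forall a x, l (vscale a x) = a * l x).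

Lemma linf_repr n (l : vec n -> R) : linf l ->
  forall x, l x = \big[Rplus/0]_(j < n) (x j * l (ebas j)).
Proof.
  move=> [Ha Hs] x.
  have Hx : x = \big[@vadd n/@vzero n]_(j < n) vscale (x j) (ebas j).
  { apply: functional_extensionality => i.
    rewrite (big_morph (fun v : vec n => v i) (id1 := 0) (op1 := Rplus)) //.
    rewrite /vscale /ebas.
    rewrite (eq_bigr (fun j => if j == i then x j else 0)).
    - by rewrite sum_delta.
    - move=> j _. case E: (i == j); rewrite eq_sym E; ring. }
  have H0 : l (@vzero n) = 0.
  { have -> : @vzero n = vscale 0 (@vzero n) by apply: functional_extensionality => i; rewrite /vscale /vzero; ring.
    rewrite Hs; ring. }
  rewrite {1}Hx (big_morph l (id1 := 0) (op1 := Rplus) Ha H0).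
  apply: eq_bigr => j _. by rewrite Hs.
Qed.

Lemma dot_addl n (x y w : vec n) : dot (vadd x y) w = dot x w + dot y w.
Proof. rewrite /dot -sum_split; apply: sum_ext => i; rewrite /vadd; ring. Qed.
Lemma dot_scall n a (x w : vec n) : dot (vscale a x) w = a * dot x w.
Proof. rewrite /dot -sum_scal; apply: sum_ext => i; rewrite /vscale; ring. Qed.
Lemma dotC n (x y : vec n) : dot x y = dot y x.
Proof. rewrite /dot; apply: sum_ext => i; ring. Qed.
Lemma dot_addr n (x y w : vec n) : dot w (vadd x y) = dot w x + dot w y.
Proof. by rewrite dotC dot_addl (dotC x) (dotC y). Qed.
Lemma dot_scalr n a (x w : vec n) : dot w (vscale a x) = a * dot w x.
Proof. by rewrite dotC dot_scall dotC. Qed.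
Lemma dot_ge0 n (x : vec n) : 0 <= dot x x.
Proof. apply: sum_ge0 => i; nra. Qed.
Lemma dot_ge_sq n (x : vec n) j : x j * x j <= dot x x.
Proof. rewrite /dot; apply: (@sum_ge_term n (fun i => x i * x i) j) => i; nra. Qed.
Lemma dot_ebas n (w : vec n) j : dot (ebas j) w = w j.
Proof.
  rewrite /dot (eq_bigr (fun i => if i == j then w i else 0)) ?sum_delta //.
  move=> i _; rewrite /ebas; case: (i == j); ring.
Qed.
Lemma dot_oppl n (x w : vec n) : dot (vopp x) w = - dot x w.
Proof.
  have -> : vopp x = vscale (-1) x by apply: functional_extensionality => i; rewrite /vopp /vscale; ring.
  rewrite dot_scall; ring.
Qed.
Lemma dot_subl n (x y w : vec n) : dot (vsub x y) w = dot x w - dot y w.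
Proof.
  have -> : vsub x y = vadd x (vscale (-1) y) by apply: functional_extensionality => i; rewrite /vsub /vadd /vscale; ring.
  rewrite dot_addl dot_scall; ring.
Qed.

Lemma lin_add n A (x y : vec n) : lin A (vadd x y) = vadd (lin A x) (lin A y).
Proof.
  apply: functional_extensionality => i; rewrite /lin /vadd -sum_split.
  apply: sum_ext => j; ring.
Qed.
Lemma lin_scal n A a (x : vec n) : lin A (vscale a x) = vscale a (lin A x).
Proof.
  apply: functional_extensionality => i; rewrite /lin /vscale -sum_scal.
  apply: sum_ext => j; ring.
Qed.

Definition mat_of n (F : vec n -> vec n) : 'I_n -> 'I_n -> R := fun i j => F (ebas j) i.

Lemma mat_of_lin n (F : vec n -> vec n) :
  (forall x y, F (vadd x y) = vadd (F x) (F y)) -> (forall a x, F (vscale a x) = vscale a (F x)) ->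
  forall x, lin (mat_of F) x = F x.
Proof.
  move=> Ha Hs x; apply: functional_extensionality => i.
  have Hl : linf (fun v => F v i).
  { split=> [v w|a v]; [by rewrite Ha | by rewrite Hs]. }
  rewrite (linf_repr Hl x) /lin /mat_of; apply: sum_ext => j; ring.
Qed.

Lemma vnorm_le n (v : vec n) r : 0 <= r -> (vnorm v <= r <-> dot v v <= r * r).
Proof.
  move=> Hr; rewrite /vnorm; have H0 := dot_ge0 v; split => H.
  - have : sqrt (dot v v) * sqrt (dot v v) <= r * r by apply: Rmult_le_compat => //; apply: sqrt_pos.
    by rewrite sqrt_sqrt.
  - rewrite -(sqrt_square r) //. apply: sqrt_le_1_alt; lra.
Qed.

Lemma vnorm_lt n (v : vec n) r : 0 < r -> dot v v < r * r -> vnorm v < r.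
Proof.
  move=> Hr H; rewrite /vnorm -(sqrt_square r); [|lra].
  apply: sqrt_lt_1_alt; split; [apply dot_ge0|lra].
Qed.
Lemma dot_subr n (x y w : vec n) : dot w (vsub x y) = dot w x - dot w y.
Proof. by rewrite dotC dot_subl (dotC x) (dotC y). Qed.


Definition Psi n (u x : vec n) : R := dot x x - (dot x u * dot x u) / dot u u.
Definition apt n (u : vec n) (s : R) : vec n := vscale (s / dot u u) u.
Definition rad n (K : vset n) (u : vec n) (s rho : R) : Prop :=
  0 <= rho /\ forall x, (K x /\ dot x u = s) <-> (dot x u = s /\ Psi u x <= rho * rho).
Definition rr n (K : vset n) (u : vec n) (s : R) : R := epsilon (inhabits 0) (rad K u s).

Lemma uu_pos n (u : vec n) : (exists i, u i <> 0) -> 0 < dot u u.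
Proof.
  move=> [i Hi]; have := dot_ge_sq u i; have : 0 < u i * u i by nra. lra.
Qed.

Lemma Psi_sub n (u x : vec n) : 0 < dot u u ->
  dot (vsub x (vscale (dot x u / dot u u) u)) (vsub x (vscale (dot x u / dot u u) u)) = Psi u x.
Proof.
  move=> Hu; rewrite /Psi !dot_subl !dot_subr !dot_scall !dot_scalr.
  rewrite (dotC u x). field. lra.
Qed.

Lemma vnorm_Psi n (u y : vec n) t r : 0 < dot u u -> 0 <= r -> dot y u = t ->
  (vnorm (vsub y (vscale (t / dot u u) u)) <= r <-> Psi u y <= r * r).
Proof. move=> Hu Hr <-; rewrite vnorm_le // Psi_sub //. Qed.

Lemma Psi_ge0 n (u x : vec n) : 0 < dot u u -> 0 <= Psi u x.
Proof. move=> Hu; rewrite -Psi_sub //; apply dot_ge0. Qed.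

Lemma dot_apt n (u : vec n) s : 0 < dot u u -> dot (apt u s) u = s.
Proof. move=> Hu; rewrite /apt dot_scall; field; lra. Qed.

Lemma Psi_apt n (u : vec n) s : 0 < dot u u -> Psi u (apt u s) = 0.
Proof. move=> Hu; rewrite /Psi /apt !dot_scall dot_scalr; field; lra. Qed.

Lemma axis_char n (K : vset n) (u : vec n) : axis_of_revolution K u ->
  forall x, K x <-> (K (apt u (dot x u)) /\ Psi u x <= rr K u (dot x u) * rr K u (dot x u)).
Proof.
  move=> [Hu0 Hax] x; have Hu := uu_pos Hu0.
  remember (dot x u) as s eqn:Hs.
  have key : K (apt u s) \/ K x -> rad K u s (rr K u s).
  { move=> Hk; case: (Hax s) => [Hemp | [r [Hr Hiff]]].
    - exfalso; case: Hk => Hk.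
      + by apply: (Hemp (apt u s)); split => //; rewrite dot_apt.
      + by apply: (Hemp x); split.
    - rewrite /rr; apply: epsilon_spec; exists r; split => // y.
      rewrite Hiff; split => -[H1 H2]; split => //.
      + by rewrite -(vnorm_Psi _ _ H1).
      + by rewrite (vnorm_Psi _ _ H1). }
  split.
  - move=> Hx; have [Hr Hiff] := key (or_intror Hx).
    have := (proj1 (Hiff x)) (conj Hx (esym Hs)) => -[_ H2]; split => //.
    apply: (proj1 ((proj2 (Hiff (apt u s))) _)); split; [by rewrite dot_apt | rewrite Psi_apt //; nra].
  - move=> [Ha Hp]; have [Hr Hiff] := key (or_introl Ha).
    by apply: (proj1 ((proj2 (Hiff x)) (conj (esym Hs) Hp))).
Qed.

Lemma rr_ge0 n (K : vset n) (u : vec n) s : axis_of_revolution K u -> K (apt u s) -> 0 <= rr K u s.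
Proof.
  move=> [Hu0 Hax] Ha; have Hu := uu_pos Hu0.
  case: (Hax s) => [Hemp | [r [Hr Hiff]]].
  - exfalso; by apply: (Hemp (apt u s)); split => //; rewrite dot_apt.
  - have : rad K u s (rr K u s).
    { rewrite /rr; apply: epsilon_spec; exists r; split => // y.
      rewrite Hiff; split => -[H1 H2]; split => //.
      + by rewrite -(vnorm_Psi _ _ H1).
      + by rewrite (vnorm_Psi _ _ H1). }
    by case.
Qed.


Lemma small_quad (a b c : R) : c < 0 -> exists e, 0 < e /\ c + b * e + a * (e * e) < 0.
Proof.
  move=> Hc.
  set M := Rabs b + Rabs a + 1.
  have HM : 0 < M by rewrite /M; have := Rabs_pos b; have := Rabs_pos a; lra.
  exists (Rmin 1 (- c / (2 * M))).
  have H1 : 0 < - c / (2 * M) by apply: Rdiv_lt_0_compat; lra.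
  set e := Rmin 1 (- c / (2 * M)).
  have He0 : 0 < e by rewrite /e; apply: Rmin_glb_lt; lra.
  have He1 : e <= 1 by apply: Rmin_l.
  have He2 : e <= - c / (2 * M) by apply: Rmin_r.
  have He3 : e * M <= - c / 2.
  { have : e * (2 * M) <= - c / (2 * M) * (2 * M) by apply: Rmult_le_compat_r; lra.
    have -> : - c / (2 * M) * (2 * M) = - c by field; lra. lra. }
  split => //.
  have Hb : b * e <= Rabs b * e.
  { have := Rle_abs b; move=> h; apply: Rmult_le_compat_r; lra. }
  have Ha : a * (e * e) <= Rabs a * e.
  { have := Rle_abs a => h.
    have : a * (e * e) <= Rabs a * (e * e) by apply: Rmult_le_compat_r; nra.
    have : Rabs a * (e * e) <= Rabs a * e by apply: Rmult_le_compat_l; [apply Rabs_pos|nra].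
    lra. }
  rewrite /M in He3. nra.
Qed.

Lemma quad_neg (g b c : R) : c < 0 -> exists l, l <> 0 /\ g * l * l + 2 * b * l + c <= 0.
Proof.
  move=> Hc; have [e [He Hq]] := @small_quad g (2 * b) c Hc.
  exists e; split; [lra | nra].
Qed.

Lemma quad_eq (z m g b c : R) : 0 < z -> 0 < m -> 0 < g ->
  (forall l, l * l * z <= m <-> g * l * l + 2 * b * l + c <= 0) -> b = 0 /\ c = - (g * m / z).
Proof.
  move=> Hz Hm Hg H.
  set L := sqrt (m / z).
  have HmZ : 0 < m / z by apply: Rdiv_lt_0_compat.
  have HL : L * L = m / z by rewrite /L sqrt_sqrt; lra.
  have HL0 : 0 < L by rewrite /L; apply: sqrt_lt_R0.
  have HLz : L * L * z = m by rewrite HL; field; lra.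
  clearbody L.
  have P1 : g * L * L + 2 * b * L + c <= 0 by apply H; lra.
  have P2 : g * (-L) * (-L) + 2 * b * (-L) + c <= 0 by apply H; nra.
  have Q1 : g * L * L + 2 * b * L + c = 0.
  { apply: Rle_antisym => //; apply: Rnot_lt_le => Hlt.
    have [e [He Hq]] := @small_quad g (2 * g * L + 2 * b) _ Hlt.
    have : g * (L + e) * (L + e) + 2 * b * (L + e) + c <= 0 by nra.
    move/H => Hc.
    have : L * L * z < (L + e) * (L + e) * z by apply: Rmult_lt_compat_r; nra.
    lra. }
  have Q2 : g * (-L) * (-L) + 2 * b * (-L) + c = 0.
  { apply: Rle_antisym => //; apply: Rnot_lt_le => Hlt.
    have [e [He Hq]] := @small_quad g (2 * g * L - 2 * b) _ Hlt.
    have : g * (-L - e) * (-L - e) + 2 * b * (-L - e) + c <= 0 by nra.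
    move/H => Hc.
    have : L * L * z < (-L - e) * (-L - e) * z by apply: Rmult_lt_compat_r; nra.
    lra. }
  have Hb : b = 0 by nra.
  split => //.
  have -> : m = L * L * z by [].
  have : c = - (g * (L * L)) by nra.
  move=> ->; field; lra.
Qed.

Lemma small_poly (a b g : R) : 0 < g -> exists dl, 0 < dl /\ forall e, Rabs e < dl -> Rabs (b * e + a * (e * e)) < g.
Proof.
  move=> Hg.
  set M := Rabs b + Rabs a + 1.
  have HM : 0 < M by rewrite /M; have := Rabs_pos b; have := Rabs_pos a; lra.
  exists (Rmin 1 (g / (2 * M))).
  have H1 : 0 < g / (2 * M) by apply: Rdiv_lt_0_compat; lra.
  split; first by apply: Rmin_glb_lt; lra.
  move=> e He.
  have He1 : Rabs e < 1 by apply: Rlt_le_trans He (Rmin_l _ _).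
  have He2 : Rabs e < g / (2 * M) by apply: Rlt_le_trans He (Rmin_r _ _).
  have He3 : Rabs e * M <= g / 2.
  { have : Rabs e * (2 * M) <= g / (2 * M) * (2 * M) by apply: Rmult_le_compat_r; lra.
    have -> : g / (2 * M) * (2 * M) = g by field; lra. lra. }
  have Hab : Rabs (b * e + a * (e * e)) <= Rabs b * Rabs e + Rabs a * (Rabs e * Rabs e).
  { apply: Rle_trans (Rabs_triang _ _) _. rewrite !Rabs_mult. lra. }
  have He0 := Rabs_pos e.
  have : Rabs a * (Rabs e * Rabs e) <= Rabs a * Rabs e.
  { apply: Rmult_le_compat_l; [apply Rabs_pos | nra]. }
  rewrite /M in He3. nra.
Qed.


Lemma ord_neq n (k i : 'I_n) : (nat_of_ord k != nat_of_ord i)%nat -> k != i.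
Proof. move=> H; apply/negP => /eqP E; move: H; by rewrite E eqxx. Qed.

Lemma third_index n (i j : 'I_n) : (2 < n)%nat -> exists k : 'I_n, k != i /\ k != j.
Proof.
  move=> Hn.
  have H0 : (0 < n)%nat by apply: leq_trans Hn.
  have H1 : (1 < n)%nat by apply: leq_trans Hn.
  case E0: ((0 != nat_of_ord i) && (0 != nat_of_ord j))%nat.
  { move/andP: E0 => [a b]; exists (Ordinal H0); split; by apply: ord_neq. }
  case E1: ((1 != nat_of_ord i) && (1 != nat_of_ord j))%nat.
  { move/andP: E1 => [a b]; exists (Ordinal H1); split; by apply: ord_neq. }
  exists (Ordinal Hn); split; apply: ord_neq => /=; move: E0 E1;
  case: (nat_of_ord i) => [|[|[|ii]]]; case: (nat_of_ord j) => [|[|[|jj]]] //.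
Qed.

Lemma dot3 n (i j k : 'I_n) a b (w : vec n) :
  dot (vadd (vadd (vscale a (ebas i)) (vscale b (ebas j))) (ebas k)) w = a * w i + b * w j + w k.
Proof. by rewrite !dot_addl !dot_scall !dot_ebas. Qed.

Lemma exists_z n (u nu : vec n) : (2 < n)%nat -> (exists i, u i <> 0) ->
  (forall c, ~ (forall j, nu j = c * u j)) ->
  exists z, dot z u = 0 /\ dot z nu = 0 /\ 0 < dot z z.
Proof.
  move=> Hn [i Hi] Hnot.
  set c0 := nu i / u i.
  have [j Hj] : exists j, nu j - c0 * u j <> 0.
  { apply: NNPP => Hc; apply: (Hnot c0) => j.
    apply: NNPP => Hj; apply: Hc; exists j; lra. }
  have Hji : j != i.
  { apply/negP => /eqP E; apply: Hj; rewrite E /c0; field; lra. }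
  have [k [Hki Hkj]] := third_index i j Hn.
  set b := - (nu k - c0 * u k) / (nu j - c0 * u j).
  set a := - (u j * b + u k) / u i.
  exists (vadd (vadd (vscale a (ebas i)) (vscale b (ebas j))) (ebas k)).
  rewrite [dot _ u]dot3 [dot _ nu]dot3.
  have Hu : a * u i + b * u j + u k = 0 by rewrite /a; field.
  split => //; split.
  - have Hb : b * (nu j - c0 * u j) + (nu k - c0 * u k) = 0 by rewrite /b; field.
    have Ha : a * (nu i - c0 * u i) = 0 by rewrite /c0; field.
    have E : a * nu i + b * nu j + nu k = (a * (nu i - c0 * u i)) + (b * (nu j - c0 * u j) + (nu k - c0 * u k)) + c0 * (a * u i + b * u j + u k) by ring.
    rewrite E Ha Hb Hu; ring.
  - have := dot_ge_sq (vadd (vadd (vscale a (ebas i)) (vscale b (ebas j))) (ebas k)) k.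
    have -> : (vadd (vadd (vscale a (ebas i)) (vscale b (ebas j))) (ebas k)) k = 1.
    { rewrite /vadd /vscale /ebas eqxx (negbTE Hki) (negbTE Hkj); ring. }
    move: (dot _ _) => D; lra.
Qed.

Lemma exists_d n (u nu z : vec n) : (exists i, u i <> 0) ->
  (forall c, ~ (forall j, nu j = c * u j)) -> dot z u = 0 -> dot z nu = 0 ->
  exists d, dot d u = 1 /\ dot d nu = 0 /\ dot d z = 0.
Proof.
  move=> [i Hi] Hnot Hzu Hzn.
  have Hnn : 0 < dot nu nu.
  { have [j Hj] : exists j, nu j <> 0.
    { apply: NNPP => Hc; apply: (Hnot 0) => j; apply: NNPP => Hj; apply: Hc; exists j; lra. }
    have := dot_ge_sq nu j; have : 0 < nu j * nu j by nra. lra. }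
  set c := dot u nu / dot nu nu.
  set d0 := vsub u (vscale c nu).
  have Hd0n : dot d0 nu = 0 by rewrite /d0 dot_subl dot_scall /c; field; lra.
  have Hd0z : dot d0 z = 0 by rewrite /d0 dot_subl dot_scall (dotC u) (dotC nu) Hzu Hzn; ring.
  have Hdd : dot d0 d0 = dot d0 u by rewrite {2}/d0 dot_subr dot_scalr Hd0n; ring.
  have Hpos : 0 < dot d0 d0.
  { have [j Hj] : exists j, d0 j <> 0.
    { apply: NNPP => Hc.
      have Hall : forall j, u j = c * nu j.
      { move=> j; apply: NNPP => Hj; apply: Hc; exists j; rewrite /d0 /vsub /vscale; lra. }
      case: (Req_dec c 0) => Hc0.
      - apply: Hi; rewrite Hall Hc0; ring.
      - apply: (Hnot (/ c)) => j; rewrite Hall; field; lra. }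
    have := dot_ge_sq d0 j; have : 0 < d0 j * d0 j by nra. lra. }
  exists (vscale (/ dot d0 u) d0).
  rewrite !dot_scall Hd0n Hd0z -Hdd; split; [field; lra | split; ring].
Qed.


Lemma Psi_line n (w a b : vec n) l : dot b w = 0 ->
  Psi w (vadd a (vscale l b)) = Psi w a + 2 * l * dot a b + l * l * dot b b.
Proof.
  move=> Hb; rewrite /Psi !dot_addl !dot_addr !dot_scall !dot_scalr Hb (dotC b a).
  rewrite /Rdiv; ring.
Qed.

Section Core.
Variables (n : nat) (K0 K1 : vset n) (u u1 nu z d : vec n) (N : vec n -> vec n).
Hypothesis Hconv : Defs.convex K0.
Hypothesis Hclos : Defs.closed_set K0.
Hypothesis Hbnd : Defs.bounded K0.
Hypothesis Hint : nonempty_interior K0.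
Hypothesis Hsym : Defs.symmetric K0.
Hypothesis Hax0 : axis_of_revolution K0 u.
Hypothesis Hax1 : axis_of_revolution K1 u1.
Hypothesis HN : forall x, K0 x <-> K1 (N x).
Hypothesis HNadd : forall x y, N (vadd x y) = vadd (N x) (N y).
Hypothesis HNsc : forall a x, N (vscale a x) = vscale a (N x).
Hypothesis Hnu : forall x, dot (N x) u1 = dot x nu.
Hypothesis Hzu : dot z u = 0.
Hypothesis Hzn : dot z nu = 0.
Hypothesis Hzz : 0 < dot z z.
Hypothesis HNz : 0 < dot (N z) (N z).
Hypothesis Hdu : dot d u = 1.
Hypothesis Hdn : dot d nu = 0.
Hypothesis Hdz : dot d z = 0.

Let Hu : 0 < dot u u := uu_pos (proj1 Hax0).
Let Hu1 : 0 < dot u1 u1 := uu_pos (proj1 Hax1).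

Definition r s := rr K0 u s.
Definition r1 s := rr K1 u1 s.
Definition E s := K0 (apt u s).
Definition E1 s := K1 (apt u1 s).
Definition Phi x := Psi u1 (N x).

Lemma char0 x : K0 x <-> (E (dot x u) /\ Psi u x <= r (dot x u) * r (dot x u)).
Proof. exact: axis_char Hax0 x. Qed.

Lemma char1 x : K0 x <-> (E1 (dot x nu) /\ Phi x <= r1 (dot x nu) * r1 (dot x nu)).
Proof. rewrite HN (axis_char Hax1 (N x)) Hnu. by []. Qed.

Lemma r_ge0 s : E s -> 0 <= r s.
Proof. exact: rr_ge0 Hax0. Qed.

Lemma N_line x l : N (vadd x (vscale l z)) = vadd (N x) (vscale l (N z)).
Proof. by rewrite HNadd HNsc. Qed.

Lemma line_s x l : dot (vadd x (vscale l z)) u = dot x u.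
Proof. rewrite dot_addl dot_scall Hzu; ring. Qed.
Lemma line_t x l : dot (vadd x (vscale l z)) nu = dot x nu.
Proof. rewrite dot_addl dot_scall Hzn; ring. Qed.
Lemma line_Psi x l : dot x z = 0 -> Psi u (vadd x (vscale l z)) = Psi u x + l * l * dot z z.
Proof. move=> Hx; rewrite Psi_line // Hx; ring. Qed.
Lemma line_Phi x l : Phi (vadd x (vscale l z)) = Phi x + 2 * l * dot (N x) (N z) + l * l * dot (N z) (N z).
Proof. rewrite /Phi N_line Psi_line // Hnu Hzn. by []. Qed.

Lemma ident x : dot x z = 0 -> E (dot x u) -> Psi u x < r (dot x u) * r (dot x u) ->
  E1 (dot x nu) /\
  r1 (dot x nu) * r1 (dot x nu) - Phi x = dot (N z) (N z) / dot z z * (r (dot x u) * r (dot x u) - Psi u x).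
Proof.
  move=> Hxz HE Hlt.
  have HK : K0 x by apply/char0; split => //; lra.
  have [HE1 _] := proj1 (char1 x) HK.
  split => //.
  set m := r (dot x u) * r (dot x u) - Psi u x.
  have Hm : 0 < m by rewrite /m; lra.
  have Hq : forall l, l * l * dot z z <= m <->
     dot (N z) (N z) * l * l + 2 * dot (N x) (N z) * l + (Phi x - r1 (dot x nu) * r1 (dot x nu)) <= 0.
  { move=> l.
    have H1 := char0 (vadd x (vscale l z)); have H2 := char1 (vadd x (vscale l z)).
    rewrite line_s line_Psi // in H1. rewrite line_t line_Phi in H2.
    split => H.
    - have : K0 (vadd x (vscale l z)) by apply/H1; split => //; rewrite /m in H; lra.
      move/H2 => [_ h]; lra.
    - have : K0 (vadd x (vscale l z)) by apply/H2; split => //; lra.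
      move/H1 => [_ h]; rewrite /m; lra. }
  have [_ Hc] := @quad_eq _ _ _ _ _ Hzz Hm HNz Hq.
  rewrite /m in Hc *. lra.
Qed.

Lemma conv x : dot x z = 0 -> E1 (dot x nu) -> Phi x < r1 (dot x nu) * r1 (dot x nu) ->
  E (dot x u) /\ Psi u x < r (dot x u) * r (dot x u).
Proof.
  move=> Hxz HE1 Hlt.
  have Hc : Phi x - r1 (dot x nu) * r1 (dot x nu) < 0 by lra.
  have [l [Hl Hq]] := @quad_neg (dot (N z) (N z)) (dot (N x) (N z)) _ Hc.
  have HK : K0 (vadd x (vscale l z)).
  { apply/char1; rewrite line_t line_Phi; split => //; lra. }
  move/char0: HK; rewrite line_s line_Psi // => -[HE Hle].
  split => //.
  have : 0 < l * l * dot z z by apply: Rmult_lt_0_compat => //; nra.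
  lra.
Qed.


Definition pos s := E s /\ 0 < r s.
Definition kap := dot (N z) (N z) / dot z z.
Definition G s := kap * (r s * r s).
Definition P s m : vec n := vadd (apt u s) (vscale m z).

Lemma kap_pos : 0 < kap.
Proof. rewrite /kap; apply: Rdiv_lt_0_compat => //. Qed.

Lemma apt_z s : dot (apt u s) z = 0.
Proof. rewrite /apt dot_scall (dotC u) Hzu; ring. Qed.

Lemma P_s s m : dot (P s m) u = s.
Proof. rewrite /P line_s dot_apt //. Qed.

Lemma P_Psi s m : Psi u (P s m) = m * m * dot z z.
Proof. rewrite /P line_Psi ?apt_z // Psi_apt //; ring. Qed.

Lemma charP s m : K0 (P s m) <-> (E s /\ m * m * dot z z <= r s * r s).
Proof. rewrite char0 P_s P_Psi. by []. Qed.

Lemma P0 s : P s 0 = apt u s.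
Proof. apply: functional_extensionality => i; rewrite /P /vadd /vscale; ring. Qed.

Lemma P_comb th s1 m1 s2 m2 :
  vadd (vscale th (P s1 m1)) (vscale (1 - th) (P s2 m2)) = P (th * s1 + (1 - th) * s2) (th * m1 + (1 - th) * m2).
Proof.
  apply: functional_extensionality => i; rewrite /P /apt /vadd /vscale.
  field. lra.
Qed.

Lemma posP s m : K0 (P s m) -> m <> 0 -> pos s.
Proof.
  move/charP => [HE Hle] Hm; split => //.
  have := r_ge0 HE; have : 0 < m * m * dot z z by apply: Rmult_lt_0_compat => //; nra.
  move: (r s) Hle => rs Hle. nra.
Qed.

Lemma ball0 : exists e, 0 < e /\ forall y, dot y y < e * e -> K0 y.
Proof.
  have [x0 [e [He Hb]]] := Hint.
  exists e; split => // y Hy.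
  have Hv : vnorm y < e by apply: vnorm_lt.
  have H1 : K0 (vadd x0 y).
  { apply: Hb; have -> : vsub (vadd x0 y) x0 = y by apply: functional_extensionality => i; rewrite /vsub /vadd; ring.
    done. }
  have H2 : K0 (vsub x0 y).
  { apply: Hb; have -> : vsub (vsub x0 y) x0 = vopp y by apply: functional_extensionality => i; rewrite /vsub /vopp; ring.
    apply: vnorm_lt => //; have -> : dot (vopp y) (vopp y) = dot y y.
    { by rewrite dot_oppl dotC dot_oppl; ring. }
    done. }
  have H3 : K0 (vopp (vsub x0 y)) by apply: Hsym.
  have := Hconv H1 H3 (l := 1/2).
  have -> : vadd (vscale (1/2) (vadd x0 y)) (vscale (1 - 1/2) (vopp (vsub x0 y))) = y.
  { apply: functional_extensionality => i; rewrite /vadd /vscale /vopp /vsub; field. }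
  move=> H; apply: H; lra.
Qed.

Lemma small_m (c : R) : 0 < c -> exists m, 0 < m /\ m * m * dot z z <= c.
Proof.
  move=> Hc; exists (Rmin 1 (c / (dot z z + 1))).
  have H1 : 0 < c / (dot z z + 1) by apply: Rdiv_lt_0_compat; lra.
  set m := Rmin 1 _.
  have Hm0 : 0 < m by rewrite /m; apply: Rmin_glb_lt; lra.
  have Hm1 : m <= 1 by apply: Rmin_l.
  have Hm2 : m <= c / (dot z z + 1) by apply: Rmin_r.
  split => //.
  have Hm3 : m * (dot z z + 1) <= c.
  { have : m * (dot z z + 1) <= c / (dot z z + 1) * (dot z z + 1) by apply: Rmult_le_compat_r; lra.
    have -> : c / (dot z z + 1) * (dot z z + 1) = c by field; lra. lra. }
  clearbody m. nra.
Qed.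

Lemma pos0P : exists m, 0 < m /\ K0 (P 0 m).
Proof.
  have [e [He Hb]] := ball0.
  have [m [Hm Hmz]] := @small_m (e * e / 2) ltac:(nra).
  exists m; split => //; apply: Hb.
  have -> : P 0 m = vscale m z.
  { apply: functional_extensionality => i; rewrite /P /apt /vadd /vscale; field; lra. }
  rewrite dot_scall dot_scalr. nra.
Qed.

Lemma pos0 : pos 0.
Proof. have [m [Hm HK]] := pos0P. apply: (posP HK); lra. Qed.

Lemma K0_zero : K0 (P 0 0).
Proof. have [e [He Hb]] := ball0. apply: Hb; rewrite P0 /apt dot_scall dot_scalr. nra. Qed.

Lemma pos_P s : pos s -> exists m, 0 < m /\ K0 (P s m).
Proof.
  move=> [HE Hr].
  have [m [Hm Hmz]] := @small_m (r s * r s) ltac:(nra).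
  exists m; split => //; apply/charP; split => //.
Qed.

Lemma pos_down s1 s : pos s1 -> 0 <= s <= s1 -> pos s.
Proof.
  move=> Hp Hs.
  case: (Req_dec s 0) => Hs0; first by rewrite Hs0; apply: pos0.
  have [m [Hm HK]] := pos_P Hp.
  have Hs1 : 0 < s1 by lra.
  have := Hconv HK K0_zero (l := s / s1).
  rewrite P_comb => H.
  have HK2 : K0 (P (s / s1 * s1 + (1 - s / s1) * 0) (s / s1 * m + (1 - s / s1) * 0)).
  { apply: H; split; [apply: Rmult_le_pos; [lra | apply: Rlt_le; apply: Rinv_0_lt_compat; lra]|].
    apply: (Rmult_le_reg_r s1) => //; rewrite /Rdiv Rmult_assoc Rinv_l; lra. }
  have -> : s = s / s1 * s1 + (1 - s / s1) * 0 by field; lra.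
  apply: (posP HK2).
  have : 0 < s / s1 by apply: Rdiv_lt_0_compat; lra.
  nra.
Qed.

Lemma E_pos s th : E s -> 0 <= th < 1 -> pos (th * s).
Proof.
  move=> HE Hth.
  have [m [Hm HK]] := pos0P.
  have HKs : K0 (P s 0) by rewrite P0.
  have := Hconv HKs HK (l := th).
  rewrite P_comb => H.
  have HK2 := H ltac:(lra).
  have -> : th * s = th * s + (1 - th) * 0 by ring.
  apply: (posP HK2). nra.
Qed.

Definition Psid := dot d d - 1 / dot u u.
Definition w1 := dot (N u) (N d) / dot u u.
Definition w2 := dot (N d) (N d).
Definition c1 := kap * Psid - w2.
Definition xe s e := vadd (apt u s) (vscale e d).

Lemma xe_z s e : dot (xe s e) z = 0.
Proof. rewrite /xe dot_addl dot_scall apt_z Hdz; ring. Qed.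
Lemma xe_u s e : dot (xe s e) u = s + e.
Proof. rewrite /xe dot_addl dot_scall dot_apt // Hdu; ring. Qed.
Lemma xe_nu s e : dot (xe s e) nu = dot (apt u s) nu.
Proof. rewrite /xe dot_addl dot_scall Hdn; ring. Qed.
Lemma xe_Psi s e : Psi u (xe s e) = e * e * Psid.
Proof.
  rewrite /Psi /xe /Psid /apt !dot_addl !dot_addr !dot_scall !dot_scalr (dotC u d) Hdu.
  field; lra.
Qed.
Lemma xe_Phi s e : Phi (xe s e) = Phi (apt u s) + 2 * e * s * w1 + e * e * w2.
Proof.
  rewrite /Phi /xe HNadd HNsc Psi_line; last by rewrite Hnu.
  rewrite /apt HNsc dot_scall /w1 /w2. field; lra.
Qed.

Lemma step s : pos s -> exists dl, 0 < dl /\ forall e, Rabs e < dl ->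
  pos (s + e) /\ G (s + e) = G s + e * e * c1 - 2 * e * s * w1.
Proof.
  move=> [HE Hr].
  have Ha := apt_z s.
  have HEa : E (dot (apt u s) u) by rewrite dot_apt.
  have Hlta : Psi u (apt u s) < r (dot (apt u s) u) * r (dot (apt u s) u).
  { rewrite Psi_apt // dot_apt //; nra. }
  have [HE1 Hid] := ident Ha HEa Hlta.
  rewrite Psi_apt // dot_apt // Rminus_0_r -/kap in Hid.
  have HG : 0 < G s by rewrite /G; apply: Rmult_lt_0_compat; [apply kap_pos | nra].
  have [dl [Hdl Hsm]] := @small_poly w2 (2 * s * w1) (G s) HG.
  exists dl; split => // e He.
  have Hb := Hsm e He.
  have HPhi : Phi (xe s e) < r1 (dot (xe s e) nu) * r1 (dot (xe s e) nu).
  { rewrite xe_Phi xe_nu. have := Rle_abs (2 * s * w1 * e + w2 * (e * e)).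
    rewrite /G in HG Hb *.
    have -> : Phi (apt u s) + 2 * e * s * w1 + e * e * w2 = Phi (apt u s) + (2 * s * w1 * e + w2 * (e * e)) by ring.
    move: (2 * s * w1 * e + w2 * (e * e)) Hb => X Hb HX.
    move: (kap * (r s * r s)) Hb Hid HG => Y Hb Hid HG. lra. }
  have HE1' : E1 (dot (xe s e) nu) by rewrite xe_nu.
  have [HEe Hlte] := conv (xe_z s e) HE1' HPhi.
  rewrite xe_u in HEe Hlte.
  have Hps := Psi_ge0 (xe s e) Hu.
  have Hr0 := r_ge0 HEe.
  split.
  - split => //. move: (r (s + e)) Hr0 Hlte => rs Hr0 Hlte. nra.
  - have [_ Hid2] := ident (xe_z s e) (ltac:(rewrite xe_u; exact HEe)) (ltac:(rewrite xe_u; exact Hlte)).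
    rewrite xe_u xe_nu xe_Psi xe_Phi in Hid2.
    rewrite /G /c1. rewrite -/kap in Hid Hid2. nra.
Qed.

Lemma consist : c1 = - w1.
Proof.
  have [d0 [Hd0 H0]] := step pos0.
  set e1 := d0 / 2.
  have He1 : Rabs e1 < d0 by rewrite /e1 Rabs_pos_eq; lra.
  have [Hp1 HG1] := H0 e1 He1.
  rewrite Rplus_0_l in Hp1 HG1.
  have [d1 [Hd1 H1]] := step Hp1.
  set e2 := Rmin d1 (d0 / 2) / 2.
  have He2p : 0 < e2 by rewrite /e2; apply: Rdiv_lt_0_compat; [apply: Rmin_glb_lt; lra | lra].
  have He2a : e2 < d1.
  { have := Rmin_l d1 (d0 / 2); rewrite /e2; lra. }
  have He2b : e2 <= d0 / 4.
  { have := Rmin_r d1 (d0 / 2); rewrite /e2; lra. }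
  have [_ HG2] := H1 e2 ltac:(rewrite Rabs_pos_eq; lra).
  have [_ HG3] := H0 (e1 + e2) ltac:(rewrite Rabs_pos_eq /e1; lra).
  rewrite Rplus_0_l in HG3.
  rewrite HG3 HG1 in HG2.
  have He1p : 0 < e1 by rewrite /e1; lra.
  clearbody e1 e2.
  have : 2 * e1 * e2 * (c1 + w1) = 0 by nra.
  move=> H; have : e1 * e2 <> 0 by nra.
  move=> H'; nra.
Qed.

Definition phi s := G s - c1 * (s * s).

Lemma loc s : pos s -> exists dl, 0 < dl /\ forall e, Rabs e < dl -> pos (s + e) /\ phi (s + e) = phi s.
Proof.
  move=> Hp; have [dl [Hdl H]] := step Hp.
  exists dl; split => // e He; have [Hp' HG] := H e He; split => //.
  rewrite /phi HG consist. ring.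
Qed.

Lemma phi_const s1 : 0 <= s1 -> pos s1 -> phi s1 = phi 0.
Proof.
  move=> Hs1 Hp1.
  pose A x := 0 <= x <= s1 /\ forall y, 0 <= y <= x -> phi y = phi 0.
  have HA0 : A 0.
  { split; [lra|] => y Hy; have -> : y = 0 by lra. done. }
  have Hbd : bound A by exists s1 => x [Hx _]; lra.
  have [m [Hub Hlub]] := completeness A Hbd (ex_intro _ 0 HA0).
  have Hm0 : 0 <= m by apply: Hub.
  have Hm1 : m <= s1 by apply: Hlub => x [Hx _]; lra.
  have Hpm : pos m by apply: (pos_down Hp1); lra.
  have [dl [Hdl Hloc]] := loc Hpm.
  have [x [HAx Hx]] : exists x, A x /\ m - dl < x.
  { apply: NNPP => Hn.
    have : m <= m - dl.
    { apply: Hlub => x HAx; apply: Rnot_lt_le => Hlt; apply: Hn; exists x; split => //; lra. }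
    lra. }
  have Hxm : x <= m by apply: Hub.
  have Hphim : phi m = phi 0.
  { have [_ Hq] := Hloc (x - m) ltac:(rewrite Rabs_left1; lra).
    replace (m + (x - m)) with x in Hq by ring.
    rewrite -Hq; apply: (proj2 HAx); case: HAx; lra. }
  have HA' : A (Rmin (m + dl / 2) s1).
  { split.
    - split; [apply: Rmin_glb; lra | apply: Rmin_r].
    - move=> y Hy.
      have Hy2 := Rle_trans _ _ _ (proj2 Hy) (Rmin_l _ _).
      case: (Rle_lt_dec y x) => Hyx.
      + apply: (proj2 HAx); lra.
      + have [_ Hq] := Hloc (y - m) ltac:(apply: Rabs_def1; lra).
        replace (m + (y - m)) with y in Hq by ring.
        by rewrite Hq. }
  have := Hub _ HA'.
  case: (Rle_lt_dec (m + dl / 2) s1) => Hc.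
  - rewrite Rmin_left //; lra.
  - rewrite Rmin_right; last lra.
    move=> Hs1m; have -> : s1 = m by lra. done.
Qed.

Definition kk := G 0.

Lemma G_pos s : pos s -> 0 < G s.
Proof. move=> [_ Hr]; rewrite /G; apply: Rmult_lt_0_compat; [apply kap_pos | nra]. Qed.

Lemma kk_pos : 0 < kk.
Proof. exact: G_pos pos0. Qed.

Lemma G_formula s : 0 <= s -> pos s -> G s = kk + c1 * (s * s).
Proof. move=> Hs Hp; have := phi_const Hs Hp; rewrite /phi /kk; lra. Qed.

Lemma dot_apt_apt s : dot (apt u s) (apt u s) = s * s / dot u u.
Proof. rewrite /apt dot_scall dot_scalr; field; lra. Qed.

Lemma E_bound : exists B, forall s, E s -> s <= B.
Proof.
  have [M HM] := Hbnd.
  exists (M * M * dot u u + 1) => s HE.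
  have Hn := HM _ HE.
  have HM0 : 0 <= M by apply: Rle_trans Hn; apply: sqrt_pos.
  move/(vnorm_le _ HM0): Hn; rewrite dot_apt_apt => Hn.
  have : s * s <= M * M * dot u u.
  { have := Rmult_le_compat_r (dot u u) _ _ (Rlt_le _ _ Hu) Hn.
    have -> : s * s / dot u u * dot u u = s * s by field; lra. done. }
  nra.
Qed.

Lemma clos_P s0 m : (forall dl, 0 < dl -> exists s, Rabs (s0 - s) < dl /\ K0 (P s m)) -> K0 (P s0 m).
Proof.
  move=> H; apply: Hclos => eps Heps.
  set mn := Rmin 1 (dot u u).
  have Hmn0 : 0 < mn by rewrite /mn; apply: Rmin_glb_lt; lra.
  have Hmn1 : mn <= 1 by apply: Rmin_l.
  have Hmn2 : mn <= dot u u by apply: Rmin_r.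
  have Hmn3 : mn * mn <= dot u u by nra.
  clearbody mn.
  have [s [Hs HK]] := H (eps * mn) ltac:(nra).
  exists (P s m); split => //.
  apply: vnorm_lt => //.
  have -> : vsub (P s0 m) (P s m) = vscale ((s0 - s) / dot u u) u.
  { apply: functional_extensionality => i; rewrite /vsub /P /vadd /apt /vscale; field; lra. }
  rewrite dot_scall dot_scalr.
  have Hsq : (s0 - s) * (s0 - s) < eps * eps * dot u u.
  { have Hab : (s0 - s) * (s0 - s) = Rabs (s0 - s) * Rabs (s0 - s).
    { rewrite -Rabs_mult Rabs_pos_eq //; apply: Rle_0_sqr. }
    rewrite Hab; have := Rabs_pos (s0 - s); move: (Rabs (s0 - s)) Hs => A Hs HA.
    have : A * A < (eps * mn) * (eps * mn) by nra.
    have : (eps * mn) * (eps * mn) <= eps * eps * dot u u by nra.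
    lra. }
  have -> : (s0 - s) / dot u u * ((s0 - s) / dot u u * dot u u) = (s0 - s) * (s0 - s) / dot u u by field; lra.
  apply: (Rmult_lt_reg_r (dot u u)) => //.
  have -> : (s0 - s) * (s0 - s) / dot u u * dot u u = (s0 - s) * (s0 - s) by field; lra.
  lra.
Qed.

Lemma notpos_le s : 0 <= s -> ~ pos s -> kk + c1 * (s * s) <= 0.
Proof.
  move=> Hs Hnp; apply: Rnot_lt_le => Hpos.
  pose A x := 0 <= x /\ pos x.
  have [B HB] := E_bound.
  have Hbd : bound A by exists B => x [_ [HE _]]; apply: HB.
  have HA0 : A 0 by split; [lra | apply pos0].
  have [m [Hub Hlub]] := completeness A Hbd (ex_intro _ 0 HA0).
  have Hm0 : 0 <= m by apply: Hub.
  have HAs : forall x, A x -> x < s.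
  { move=> x [Hx Hp]; apply: Rnot_le_lt => Hsx; apply: Hnp; apply: (pos_down Hp); lra. }
  have Hms : m <= s by apply: Hlub => x /HAs; lra.
  set cm := Rmin kk (kk + c1 * (s * s)).
  have Hcm : 0 < cm by rewrite /cm; have := kk_pos; move=> h; apply: Rmin_glb_lt; lra.
  have HGx : forall x, A x -> cm <= G x.
  { move=> x [Hx Hp]; rewrite G_formula //.
    have Hxs := HAs x (conj Hx Hp).
    case: (Rle_lt_dec 0 c1) => Hc.
    - apply: Rle_trans (Rmin_l _ _) _; nra.
    - apply: Rle_trans (Rmin_r _ _) _; have : x * x <= s * s by nra. nra. }
  have [mu [Hmu Hmuz]] := @small_m (cm / kap) ltac:(apply: Rdiv_lt_0_compat => //; apply kap_pos).
  have HKx : forall x, A x -> K0 (P x mu).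
  { move=> x HAx; apply/charP; split; first by case: HAx => _ [].
    have := HGx x HAx; rewrite /G => h.
    have : cm / kap <= r x * r x.
    { apply: (Rmult_le_reg_l kap); first by apply kap_pos.
      have -> : kap * (cm / kap) = cm by field; have := kap_pos; lra. done. }
    lra. }
  have HKm : K0 (P m mu).
  { apply: clos_P => dl Hdl.
    have [x [HAx Hx]] : exists x, A x /\ m - dl < x.
    { apply: NNPP => Hn.
      have : m <= m - dl.
      { apply: Hlub => x HAx; apply: Rnot_lt_le => Hlt; apply: Hn; exists x; split => //; lra. }
      lra. }
    exists x; split; last by apply: HKx.
    have := Hub _ HAx; move=> h; rewrite Rabs_pos_eq; lra. }
  have Hpm : pos m by apply: (posP HKm); lra.
  have [dl [Hdl Hloc]] := loc Hpm.
  have [Hp2 _] := Hloc (dl / 2) ltac:(rewrite Rabs_pos_eq; lra).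
  have HA2 : A (m + dl / 2) by split => //; lra.
  have := Hub _ HA2.
  lra.
Qed.

Lemma E_ge s : 0 <= s -> E s -> 0 <= kk + c1 * (s * s).
Proof.
  move=> Hs HE; apply: Rnot_lt_le => Hlt.
  have Hk := kk_pos.
  have Hs0 : 0 < s.
  { apply: Rnot_le_lt => Hs0; have E0 : s = 0 by lra. rewrite E0 in Hlt; nra. }
  have Hc1 : c1 < 0 by nra.
  set q := kk / (- c1 * (s * s)).
  have Hkq : kk = q * (- c1 * (s * s)) by rewrite /q; field; nra.
  clearbody q.
  have Hcs : 0 < - c1 * (s * s) by nra.
  have Hq0 : 0 < q by nra.
  have Hq1 : q < 1 by nra.
  set th := (1 + q) / 2.
  have Hth : 0 <= th < 1 by rewrite /th; lra.
  have Hth2 : q <= th * th by rewrite /th; nra.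
  clearbody th.
  have Hp := E_pos HE Hth.
  have HG := G_pos Hp.
  have Hts : 0 <= th * s by nra.
  rewrite (G_formula Hts Hp) in HG.
  have : kk <= - c1 * (s * s) * (th * th) by rewrite Hkq; nra.
  nra.
Qed.

Lemma notE_lt s : 0 <= s -> ~ E s -> kk + c1 * (s * s) < 0.
Proof.
  move=> Hs HnE.
  have Hle : kk + c1 * (s * s) <= 0 by apply: notpos_le => // -[].
  case: (Rle_lt_or_eq_dec _ _ Hle) => // Heq; exfalso.
  have Hk := kk_pos.
  have Hs0 : 0 < s.
  { apply: Rnot_le_lt => Hs0; have E0 : s = 0 by lra. rewrite E0 in Heq; nra. }
  have Hc1 : c1 < 0 by nra.
  apply: HnE; rewrite /E -P0; apply: clos_P => dl Hdl.
  set al := Rmin (1 / 2) (dl / (s + 1)).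
  have Hal0 : 0 < al by rewrite /al; apply: Rmin_glb_lt; [lra | apply: Rdiv_lt_0_compat; lra].
  have Hal1 : al <= 1 / 2 by apply: Rmin_l.
  have Hal2 : al * (s + 1) <= dl.
  { have : al <= dl / (s + 1) by apply: Rmin_r.
    move=> h; have := Rmult_le_compat_r (s + 1) _ _ ltac:(lra) h.
    have -> : dl / (s + 1) * (s + 1) = dl by field; lra. done. }
  clearbody al.
  have Hpos' : 0 <= (1 - al) * s by nra.
  exists ((1 - al) * s); split.
  - rewrite Rabs_pos_eq; nra.
  - rewrite P0.
    have : ~ ~ pos ((1 - al) * s).
    { move=> Hnp; have := notpos_le Hpos' Hnp.
      have Hkk : kk = - c1 * (s * s) by lra.
      have -> : kk + c1 * ((1 - al) * s * ((1 - al) * s)) = (- c1 * (s * s)) * (al * (2 - al)) by rewrite Hkk; ring.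
      have : 0 < - c1 * (s * s) by nra.
      have : 0 < al * (2 - al) by nra.
      move=> h1 h2 h3. have := Rmult_lt_0_compat _ _ h2 h1. lra. }
    by move/NNPP => [].
Qed.

Lemma K0_char_pos x : 0 <= dot x u -> (K0 x <-> kap * Psi u x - c1 * (dot x u * dot x u) <= kk).
Proof.
  move=> Hs; rewrite char0.
  have Hps := Psi_ge0 x Hu.
  have Hk := kap_pos.
  move: (dot x u) Hs => s Hs.
  split.
  - move=> [HE Hle].
    case: (classic (pos s)) => Hp.
    + have := G_formula Hs Hp; rewrite /G => HG.
      have : kap * Psi u x <= kap * (r s * r s) by apply: Rmult_le_compat_l; lra.
      lra.
    + have Hr0 := r_ge0 HE.
      have Hr : r s = 0 by apply: Rle_antisym => //; apply: Rnot_lt_le => Hlt; apply: Hp; split.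
      rewrite Hr in Hle.
      have H1 := notpos_le Hs Hp; have H2 := E_ge Hs HE.
      have : Psi u x = 0 by lra.
      move=> ->; lra.
  - move=> Hq.
    case: (classic (E s)) => HE; last first.
    { have := notE_lt Hs HE. have : 0 <= kap * Psi u x by apply: Rmult_le_pos; lra. lra. }
    split => //.
    case: (classic (pos s)) => Hp.
    + have := G_formula Hs Hp; rewrite /G => HG.
      apply: (Rmult_le_reg_l kap) => //; lra.
    + have H1 := notpos_le Hs Hp.
      have : kap * Psi u x <= 0 by lra.
      have : Psi u x <= 0.
      { apply: Rnot_lt_le => Hlt; have : 0 < kap * Psi u x by apply: Rmult_lt_0_compat. lra. }
      have : 0 <= r s * r s by apply: Rle_0_sqr.
      lra.
Qed.

Lemma K0_opp x : K0 x <-> K0 (vopp x).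
Proof.
  split; first by apply: Hsym.
  move/Hsym; have -> : vopp (vopp x) = x by apply: functional_extensionality => i; rewrite /vopp; ring.
  done.
Qed.

Lemma Psi_opp x : Psi u (vopp x) = Psi u x.
Proof. rewrite /Psi !dot_oppl (dotC x (vopp x)) dot_oppl; rewrite /Rdiv; ring. Qed.

Lemma K0_char x : K0 x <-> kap * Psi u x - c1 * (dot x u * dot x u) <= kk.
Proof.
  case: (Rle_lt_dec 0 (dot x u)) => Hs; first by apply: K0_char_pos.
  rewrite K0_opp K0_char_pos; last by rewrite dot_oppl; lra.
  rewrite Psi_opp dot_oppl.
  have -> : - dot x u * - dot x u = dot x u * dot x u by ring.
  done.
Qed.

Lemma c1_neg : c1 < 0.
Proof.
  apply: Rnot_le_lt => Hc.
  have [B HB] := E_bound.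
  set s := Rmax B 0 + 1.
  have HE : E s.
  { rewrite /E; apply/K0_char; rewrite Psi_apt // dot_apt //.
    have := kk_pos; have : 0 <= c1 * (s * s) by apply: Rmult_le_pos => //; apply: Rle_0_sqr.
    lra. }
  have := HB _ HE; rewrite /s; have := Rmax_l B 0; lra.
Qed.

Lemma core_ellipse : exists a c k, 0 < a /\ c < 0 /\ 0 < k /\
  forall x, K0 x <-> a * Psi u x - c * (dot x u * dot x u) <= k.
Proof.
  exists kap, c1, kk; split; [apply kap_pos | split; [apply c1_neg | split; [apply kk_pos | apply K0_char]]].
Qed.

End Core.


Definition Lmap n (a b : R) (u y : vec n) : vec n := vadd (vscale a y) (vscale (b * dot y u) u).

Lemma Lmap_comp n a b a' b' (u y : vec n) :
  Lmap a b u (Lmap a' b' u y) = Lmap (a * a') (a * b' + b * a' + b * b' * dot u u) u y.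
Proof.
  rewrite /Lmap dot_addl !dot_scall.
  apply: functional_extensionality => i; rewrite /vadd /vscale; ring.
Qed.

Lemma Lmap_id n (u y : vec n) : Lmap 1 0 u y = y.
Proof. apply: functional_extensionality => i; rewrite /Lmap /vadd /vscale; ring. Qed.

Lemma Lmap_dot n a b (u y : vec n) :
  dot (Lmap a b u y) (Lmap a b u y) = a * a * dot y y + (2 * a * b + b * b * dot u u) * (dot y u * dot y u).
Proof.
  rewrite /Lmap !dot_addl !dot_addr !dot_scall !dot_scalr (dotC u y); ring.
Qed.

Lemma Lmap_add n a b (u x y : vec n) : Lmap a b u (vadd x y) = vadd (Lmap a b u x) (Lmap a b u y).
Proof.
  rewrite /Lmap dot_addl; apply: functional_extensionality => i; rewrite /vadd /vscale; ring.
Qed.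
Lemma Lmap_scal n a b (u : vec n) c x : Lmap a b u (vscale c x) = vscale c (Lmap a b u x).
Proof.
  rewrite /Lmap dot_scall; apply: functional_extensionality => i; rewrite /vadd /vscale; ring.
Qed.

Lemma lin_zero n A : lin A (@vzero n) = @vzero n.
Proof.
  have -> : @vzero n = vscale 0 (@vzero n) by apply: functional_extensionality => i; rewrite /vscale /vzero; ring.
  rewrite lin_scal; apply: functional_extensionality => i; rewrite /vscale /vzero; ring.
Qed.

Lemma dot_zero n (v : vec n) : dot v v = 0 -> v = @vzero n.
Proof.
  move=> H; apply: functional_extensionality => i; rewrite /vzero.
  have := dot_ge_sq v i; nra.
Qed.

Lemma ellipsoid_of n (K K0 : vset n) (A B : 'I_n -> 'I_n -> R) (u : vec n) a c k :
  (forall x, lin B (lin A x) = x /\ lin A (lin B x) = x) ->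
  same_set K (Defs.image A K0) -> 0 < dot u u ->
  0 < a -> c < 0 -> 0 < k ->
  (forall x, K0 x <-> a * Psi u x - c * (dot x u * dot x u) <= k) ->
  ellipsoid K.
Proof.
  move=> HAB HK Hu Ha Hc Hk HK0.
  set p := a / k.
  set q := (- c - a / dot u u) / k.
  have Hp : 0 < p by rewrite /p; apply: Rdiv_lt_0_compat.
  have Hpq : 0 < p + q * dot u u.
  { rewrite /p /q. have -> : a / k + (- c - a / dot u u) / k * dot u u = (- c) * dot u u / k by field; lra.
    apply: Rdiv_lt_0_compat => //; nra. }
  set al := sqrt p.
  have Hal : 0 < al by apply: sqrt_lt_R0.
  have Hal2 : al * al = p by rewrite /al sqrt_sqrt; lra.
  set ga := sqrt (p + q * dot u u).
  have Hga : 0 < ga by apply: sqrt_lt_R0.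
  have Hga2 : ga * ga = p + q * dot u u by rewrite /ga sqrt_sqrt; lra.
  set be := (ga - al) / dot u u.
  have Hbe : al + be * dot u u = ga by rewrite /be; field; lra.
  set ee := - be / (al * ga).
  have Hee : ee = - be / (al * ga) by [].
  clearbody al ga be ee.
  pose D := Lmap al be u.
  pose L := Lmap (/ al) ee u.
  have HDL : forall y, D (L y) = y.
  { move=> y; rewrite /D /L Lmap_comp -{2}(Lmap_id u y); f_equal.
    - field; lra.
    - rewrite Hee -Hbe; field; rewrite Hbe; split; lra. }
  have HLD : forall y, L (D y) = y.
  { move=> y; rewrite /D /L Lmap_comp -{2}(Lmap_id u y); f_equal.
    - field; lra.
    - rewrite Hee -Hbe; field; rewrite Hbe; split; lra. }
  have HDdot : forall x, dot (D x) (D x) = p * dot x x + q * (dot x u * dot x u).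
  { move=> x; rewrite /D Lmap_dot Hal2.
    have -> : 2 * al * be + be * be * dot u u = q.
    { apply: (Rmult_eq_reg_r (dot u u)); last lra.
      have : (al + be * dot u u) * (al + be * dot u u) = p + q * dot u u by rewrite Hbe.
      nra. }
    done. }
  have HK0' : forall x, K0 x <-> dot (D x) (D x) <= 1.
  { move=> x; rewrite HK0 HDdot /p /q /Psi.
    split => H.
    - apply: (Rmult_le_reg_r k) => //.
      have -> : (a / k * dot x x + (- c - a / dot u u) / k * (dot x u * dot x u)) * k
        = a * (dot x x - dot x u * dot x u / dot u u) - c * (dot x u * dot x u) by field; lra.
      lra.
    - have := Rmult_le_compat_r k _ _ (Rlt_le _ _ Hk) H.
      have -> : (a / k * dot x x + (- c - a / dot u u) / k * (dot x u * dot x u)) * k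
        = a * (dot x x - dot x u * dot x u / dot u u) - c * (dot x u * dot x u) by field; lra.
      lra. }
  have [HBA HAB'] : (forall x, lin B (lin A x) = x) /\ (forall x, lin A (lin B x) = x).
  { split => x; apply HAB. }
  have HF1a : forall x y, lin A (L (vadd x y)) = vadd (lin A (L x)) (lin A (L y)).
  { move=> x y; by rewrite /L Lmap_add lin_add. }
  have HF1s : forall c0 x, lin A (L (vscale c0 x)) = vscale c0 (lin A (L x)).
  { move=> c0 x; by rewrite /L Lmap_scal lin_scal. }
  have HF2a : forall x y, D (lin B (vadd x y)) = vadd (D (lin B x)) (D (lin B y)).
  { move=> x y; by rewrite /D lin_add Lmap_add. }
  have HF2s : forall c0 x, D (lin B (vscale c0 x)) = vscale c0 (D (lin B x)).
  { move=> c0 x; by rewrite /D lin_scal Lmap_scal. }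
  have HC := mat_of_lin HF1a HF1s.
  have HBm := mat_of_lin HF2a HF2s.
  exists (mat_of (fun y => lin A (L y))), (@vzero n); split.
  - exists (mat_of (fun x => D (lin B x))) => x; split.
    + by rewrite HC HBm HBA HDL.
    + by rewrite HBm HC HLD HAB'.
  - move=> x; rewrite HK; split.
    + move=> [x0 [HKx0 ->]].
      exists (D x0); split.
      * rewrite vnorm_le; last lra. move/HK0': HKx0; lra.
      * rewrite HC HLD; apply: functional_extensionality => i; rewrite /vadd /vzero; ring.
    + move=> [y [Hy ->]].
      exists (L y); split.
      * apply/HK0'; rewrite HDL. move: Hy; rewrite vnorm_le; lra.
      * rewrite HC; apply: functional_extensionality => i; rewrite /vadd /vzero; ring.
Qed.


Theorem mainTheorem9 (n : nat) (K : vset n) (H1 H2 : vset n) :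
  is_true (leq 3 n) ->
  affine_symmetric_body_of_revolution K ->
  hyperplane_of_revolution K H1 ->
  hyperplane_of_revolution K H2 ->
  ~ same_set H1 H2 ->
  ellipsoid K.
Proof.
  move=> Hn _ [A1 [K0 [u [[B1 HB1] [[[[Hconv [Hclos [Hbnd Hint]]] Hsym] Hax0] [HK1 HH1]]]]]].
  move=> [A2 [K1 [u1 [[B2 HB2] [[_ Hax1] [HK2 HH2]]]]]] Hne.
  have BA1 : forall x, lin B1 (lin A1 x) = x by move=> x; case: (HB1 x).
  have AB1 : forall x, lin A1 (lin B1 x) = x by move=> x; case: (HB1 x).
  have BA2 : forall x, lin B2 (lin A2 x) = x by move=> x; case: (HB2 x).
  have AB2 : forall x, lin A2 (lin B2 x) = x by move=> x; case: (HB2 x).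
  pose N x := lin B2 (lin A1 x).
  have HN : forall x, K0 x <-> K1 (N x).
  { move=> x; split => Hx.
    - have : K (lin A1 x) by apply/HK1; exists x.
      move/HK2 => [y [Hy Hxy]]; by rewrite /N Hxy BA2.
    - have : K (lin A2 (N x)) by apply/HK2; exists (N x).
      rewrite /N AB2; move/HK1 => [y [Hy Hxy]].
      by rewrite -(BA1 x) Hxy BA1. }
  have HNadd : forall x y, N (vadd x y) = vadd (N x) (N y) by move=> x y; rewrite /N !lin_add.
  have HNsc : forall a x, N (vscale a x) = vscale a (N x) by move=> a x; rewrite /N !lin_scal.
  pose nu : vec n := fun j => dot (N (ebas j)) u1.
  have Hnu : forall x, dot (N x) u1 = dot x nu.
  { move=> x.
    have Hl : linf (fun x => dot (N x) u1).
    { split => [x1 y1 | a x1]; by rewrite ?HNadd ?HNsc ?dot_addl ?dot_scall. }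
    by rewrite (linf_repr Hl x). }
  have Hu := uu_pos (proj1 Hax0).
  have Hu1 := uu_pos (proj1 Hax1).
  have Hnot : forall c, ~ (forall j, nu j = c * u j).
  { move=> c Hc; apply: Hne.
    have Hnuc : nu = vscale c u by apply: functional_extensionality => j; rewrite Hc.
    have Ht : forall x, dot (N x) u1 = c * dot x u by move=> x; rewrite Hnu Hnuc dot_scalr.
    move=> y; rewrite HH1 HH2; split.
    - move=> [x [Hx ->]]; exists (N x); split.
      + by rewrite /orth_hyperplane Ht Hx; ring.
      + by rewrite /N AB2.
    - move=> [w [Hw ->]]; exists (lin B1 (lin A2 w)); split; last by rewrite AB1.
      have HNw : N (lin B1 (lin A2 w)) = w by rewrite /N AB1 BA2.
      have := Ht (lin B1 (lin A2 w)); rewrite HNw.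
      rewrite /orth_hyperplane in Hw *; rewrite Hw => H0.
      case: (Req_dec c 0) => Hc0.
      + exfalso; have := Ht (lin B1 (lin A2 u1)); rewrite /N AB1 BA2 Hc0; lra.
      + apply: (Rmult_eq_reg_l c); lra. }
  have Hn' : (2 < n)%nat by [].
  have [z [Hzu [Hzn Hzz]]] := exists_z Hn' (proj1 Hax0) Hnot.
  have HNz : 0 < dot (N z) (N z).
  { case: (Rle_lt_dec (dot (N z) (N z)) 0) => // Hle; exfalso.
    have H0 : N z = @vzero n by apply: dot_zero; have := dot_ge0 (N z); lra.
    have : lin A2 (N z) = lin A2 (@vzero n) by rewrite H0.
    rewrite /N AB2 lin_zero => HA.
    have : z = @vzero n by rewrite -(BA1 z) HA lin_zero.
    move=> Hz; rewrite Hz /dot in Hzz.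
    move: Hzz; rewrite big1 /vzero; [lra | move=> i _; ring]. }
  have [d [Hdu [Hdn Hdz]]] := exists_d (proj1 Hax0) Hnot Hzu Hzn.
  have [a [c [k [Ha [Hc [Hk Hchar]]]]]] :=
    core_ellipse Hconv Hclos Hbnd Hint Hsym Hax0 Hax1 HN HNadd HNsc Hnu Hzu Hzn Hzz HNz Hdu Hdn Hdz.
  exact: (ellipsoid_of HB1 HK1 Hu Ha Hc Hk Hchar).
Qed.
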